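(* Let $F$ be a graph with at least two vertices, let $r\ge 3$, let $\mathcal H$ be a Berge-$F$-free $r$-uniform hypergraph, and let $p=|E(F)|$. Define $\mathcal H_1,\mathcal H_2,\mathcal H_3,G_1,G_2,G_3$ as in the context (for an arbitrary choice of the triangles $T_h$). Then: (i) $G_2$ contains no copy of $F$; (ii) with $k=\min\{r-1,|V(F)|-1\}$, $$|E(\mathcal H)|\le (|E(F)|-1)\,\mathcal N(K_3,G_1)+\mathcal N(K_r,G_2)+\frac{|E(G_3)|}{k(r-k)}.$$
   Context: The shadow graph of $\mathcal H$ is the graph on $V(\mathcal H)$ where $xy$ is an edge iff some hyperedge contains $\{x,y\}$. An edge $xy$ of the shadow graph is $q$-heavy if at least $q$ hyperedges of $\mathcal H$ contain $\{x,y\}$, and $q$-light otherwise; ''heavy''/''light'' mean $2$-heavy/$2$-light. For a hyperedge $h$, its subedges are the pairs inside $h$. $\mathcal H_1$ is the set of hyperedges $h$ containing three vertices forming a triangle $T$ (all pairs inside $h$) such that at least two edges of $T$ are heavy and at least one edge of $T$ is $p$-light; for each $h\in\mathcal H_1$ fix one such triangle $T_h$, and let $G_1$ be the graph formed by the edges of all chosen triangles $T_h$. $\mathcal H_2$ is the set of hyperedges all of whose subedges are $p$-heavy, and $G_2$ is the shadow graph of $\mathcal H_2$. $\mathcal H_3$ consists of all remaining hyperedges, and $G_3$ is the graph formed by the light edges contained in hyperedges of $\mathcal H_3$. $\mathcal N(H,G)$ denotes the number of copies of $H$ in $G$. Berge-$F$: injections $\varphi:V(F)\to V(\mathcal H)$,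 $f:E(F)\to E(\mathcal H)$ with $\{\varphi(x),\varphi(y)\}\subseteq f(xy)$ for each $xy\in E(F)$. *)

(* Defs.v *)
From mathcomp Require Import all_boot all_order all_algebra.
Set Implicit Arguments. Unset Strict Implicit. Unset Printing Implicit Defensive.

(* Graphs (on a finType) are represented by their edge sets: sets of 2-subsets.
   Hypergraphs are sets of hyperedges (subsets of the vertex type). *)
Section Defs.
Variable V : finType.

Definition codeg (H : {set {set V}}) (e : {set V}) : nat :=
  #|[set h in H | e \subset h]|.

Definition heavy (q : nat) (H : {set {set V}}) (e : {set V}) : bool :=
  q <= codeg H e.

Definition subedges (h : {set V}) : {set {set V}} :=
  [set e : {set V} | (e \subset h) && (#|e| == 2)].

Definition shadow (H : {set {set V}}) : {set {set V}} :=
  [set e : {set V} | (#|e| == 2) && [exists h in H, e \subset h]].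

Definition good_triangle (H : {set {set V}}) (p : nat) (h T : {set V}) : bool :=
  [&& T \subset h, #|T| == 3,
      2 <= #|[set e in subedges T | heavy 2 H e]|
    & [exists e in subedges T, ~~ heavy p H e]].

Definition H1 (H : {set {set V}}) (p : nat) : {set {set V}} :=
  [set h in H | [exists T, good_triangle H p h T]].

(* G1 for a choice function Tch : h |-> T_h *)
Definition G1 (H : {set {set V}}) (p : nat) (Tch : {set V} -> {set V})
  : {set {set V}} :=
  \bigcup_(h in H1 H p) subedges (Tch h).

Definition H2 (H : {set {set V}}) (p : nat) : {set {set V}} :=
  [set h in H | [forall e in subedges h, heavy p H e]].

Definition G2 (H : {set {set V}}) (p : nat) : {set {set V}} :=
  shadow (H2 H p).

Definition H3 (H : {set {set V}}) (p : nat) : {set {set V}} :=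
  H :\: (H1 H p :|: H2 H p).

Definition G3 (H : {set {set V}}) (p : nat) : {set {set V}} :=
  [set e in \bigcup_(h in H3 H p) subedges h | ~~ heavy 2 H e].

Definition ncliques (k : nat) (G : {set {set V}}) : nat :=
  #|[set S : {set V} | (#|S| == k) && (subedges S \subset G)]|.

End Defs.

(* F is a graph on U with edge set EF (a set of 2-subsets of U). *)
Definition is_graph (U : finType) (EF : {set {set U}}) : Prop :=
  forall e, e \in EF -> #|e| = 2.

Definition has_BergeF (U V : finType) (EF : {set {set U}}) (H : {set {set V}})
  : Prop :=
  exists (phi : U -> V) (f : {set U} -> {set V}),
    [/\ injective phi, {in EF &, injective f}
      & forall e, e \in EF -> f e \in H /\ phi @: e \subset f e].

Definition contains_copy (U V : finType) (EF : {set {set U}}) (G : {set {set V}})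
  : Prop :=
  exists phi : U -> V, injective phi /\ forall e, e \in EF -> phi @: e \in G.

(* Main.v *)
Require Import Defs.
From mathcomp Require Import all_boot all_order all_algebra.
From mathcomp Require Import zify.
Import Order.TTheory GRing.Theory Num.Theory.
Set Implicit Arguments. Unset Strict Implicit. Unset Printing Implicit Defensive.
Lemma set2C (T : finType) (a b : T) : [set a; b] = [set b; a].
Proof. by apply/setP=> x; rewrite !inE orbC. Qed.

Lemma sub2P (T : finType) (S : {set T}) a b :
  a \in S -> b \in S -> a != b -> [set a; b] \in subedges S.
Proof.
move=> aS bS ab; rewrite inE cards2 ab andbT.
by apply/subsetP=> x; rewrite !inE => /orP[]/eqP->.
Qed.

Lemma set2_neq (T : finType) (x y z : T) : x != y -> x != z -> [set x; y] != [set y; z].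
Proof.
move=> xy xz; apply/eqP=> E; have : x \in [set y; z] by rewrite -E !inE eqxx.
by rewrite !inE (negbTE xy) (negbTE xz).
Qed.

Lemma codeg_gt0 (T : finType) (H : {set {set T}}) (h e : {set T}) :
  h \in H -> e \subset h -> 0 < codeg H e.
Proof. by move=> hH eh; apply/card_gt0P; exists h; rewrite inE hH. Qed.

Lemma dcount (T1 T2 : finType) (A : {set T1}) (B : {set T2}) (R : T1 -> T2 -> bool) :
  \sum_(x in A) #|[set y in B | R x y]| = \sum_(y in B) #|[set x in A | R x y]|.
Proof.
have E : forall (T : finType) (C : {set T}) (P : pred T),
    #|[set y in C | P y]| = \sum_(y in C) (P y : nat).
  move=> T C P; rewrite -sum1_card big_mkcond /= [RHS]big_mkcond /=.
  by apply: eq_bigr => y _; rewrite inE; case: (y \in C); case: (P y).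
under eq_bigr => x _ do rewrite (E _ _ (R x)).
under [RHS]eq_bigr => y _ do rewrite (E _ _ (fun x => R x y)).
exact: exchange_big.
Qed.

Lemma tri_lemma (T : finType) (H : {set {set T}}) p h x y z :
  h \in H -> x \in h -> y \in h -> z \in h -> x != y -> y != z -> x != z ->
  heavy 2 H [set x; y] -> heavy 2 H [set y; z] ->
  [|| ~~ heavy p H [set x; y], ~~ heavy p H [set y; z] | ~~ heavy p H [set x; z]] ->
  h \in H1 H p.
Proof.
move=> hH xh yh zh xy yz xz hxy hyz hl.
rewrite inE hH /=; apply/existsP; exists (z |: [set x; y]).
have xT : x \in z |: [set x; y] by rewrite !inE eqxx ?orbT.
have yT : y \in z |: [set x; y] by rewrite !inE eqxx ?orbT.
have zT : z \in z |: [set x; y] by rewrite !inE eqxx ?orbT.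
rewrite /good_triangle; apply/and4P; split.
- by apply/subsetP=> w; rewrite !inE => /or3P[]/eqP->.
- rewrite cardsU1 cards2 xy !inE negb_or !(eq_sym z) xz yz //.
- apply: leq_trans (subset_leq_card (_ : [set [set x; y]; [set y; z]] \subset _)).
    by rewrite cards2 set2_neq.
  apply/subsetP=> e; rewrite in_set2 => /orP[]/eqP->; rewrite in_set ?hxy ?hyz andbT sub2P //.
- apply/existsP; case/or3P: hl => hl.
  + by exists [set x; y]; rewrite hl sub2P.
  + by exists [set y; z]; rewrite hl sub2P.
  + by exists [set x; z]; rewrite hl sub2P.
Qed.

Lemma trans_lemma (T : finType) (H : {set {set T}}) p h x y z :
  h \in H -> h \notin H1 H p -> 2 <= p ->
  x \in h -> y \in h -> z \in h -> x != y -> y != z -> x != z ->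
  heavy 2 H [set x; y] -> heavy 2 H [set y; z] -> heavy 2 H [set x; z].
Proof.
move=> hH nH1 p2 xh yh zh xy yz xz hxy hyz; apply: contraNT nH1 => nh.
have nh' : ~~ heavy p H [set x; z].
  by apply: contra nh => hp; exact: leq_trans p2 hp.
apply: (@tri_lemma T H p h x y z hH xh yh zh xy yz xz hxy hyz); by rewrite nh' !orbT.
Qed.

Lemma sdr_n (T1 T2 : finType) (y0 : T2) (S : T1 -> {set T2}) n :
  forall A : {set T1}, #|A| = n -> (forall e, e \in A -> n <= #|S e|) ->
  exists f : T1 -> T2, {in A &, injective f} /\ (forall e, e \in A -> f e \in S e).
Proof.
elim: n => [|n IH] A cA hS.
  exists (fun _ => y0); split.
    by move=> x y; move/eqP: cA; rewrite cards_eq0 => /eqP->; rewrite inE.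
  by move=> e; move/eqP: cA; rewrite cards_eq0 => /eqP->; rewrite inE.
have [e0 e0A] : exists e0, e0 \in A by apply/card_gt0P; rewrite cA.
have cA' : #|A :\ e0| = n by move: cA; rewrite (cardsD1 e0) e0A add1n => -[].
have [f' [fi fS]] := IH (A :\ e0) cA' (fun e eA => ltnW (hS e (subsetP (subsetDl _ _) e eA))).
have : 0 < #|S e0 :\: f' @: (A :\ e0)|.
  rewrite cardsD; have := hS e0 e0A.
  have := leq_imset_card f' (A :\ e0); rewrite cA'.
  have := subset_leq_card (subsetIr (S e0) (f' @: (A :\ e0))).
  lia.
case/card_gt0P => y; rewrite inE => /andP[ynot yS].
exists (fun e => if e == e0 then y else f' e); split.
  move=> a b aA bA /=.
  case: (eqVneq a e0) => [->|ae]; case: (eqVneq b e0) => [->|be] //.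
  - move=> E; move: ynot; rewrite E; case/negP; apply: imset_f.
    by rewrite !inE be.
  - move=> E; move: ynot; rewrite -E; case/negP; apply: imset_f.
    by rewrite !inE ae.
  - by apply: fi; rewrite !inE ?ae ?be.
move=> e eA /=; case: (eqVneq e e0) => [->|ee] //.
by apply: fS; rewrite !inE ee.
Qed.

Lemma berge_of (U V : finType) (EF : {set {set U}}) (H : {set {set V}}) (phi : U -> V) :
  injective phi -> (forall e, e \in EF -> #|EF| <= codeg H (phi @: e)) -> has_BergeF EF H.
Proof.
move=> phii hc.
have [f [fi fS]] := @sdr_n _ _ set0 (fun e : {set U} => [set h in H | phi @: e \subset h]) _ EF erefl hc.
exists phi, f; split => // e eE; have := fS e eE; rewrite inE => /andP[] //.
Qed.

Lemma berge_clique (U V : finType) (EF : {set {set U}}) (H : {set {set V}}) (C : {set V}) (x0 : V) :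
  is_graph EF -> #|U| <= #|C| ->
  (forall x y, x \in C -> y \in C -> x != y -> heavy #|EF| H [set x; y]) ->
  has_BergeF EF H.
Proof.
move=> gF UC hC.
pose phi (u : U) := nth x0 (enum C) (enum_rank u).
have rk (u : U) : (enum_rank u < size (enum C))%N.
  by rewrite -cardE; apply: leq_trans (ltn_ord _) _.
have phii : injective phi.
  move=> u v /eqP; rewrite /phi nth_uniq ?enum_uniq // => /eqP E.
  by apply: enum_rank_inj; apply: val_inj.
have phiC u : phi u \in C by rewrite -mem_enum mem_nth.
apply: (@berge_of _ _ EF H phi phii) => e eE.
have : #|phi @: e| == 2 by rewrite card_imset // gF.
case/cards2P => x [y [xy E]]; rewrite E.
have inC w : w \in phi @: e -> w \in C by case/imsetP => u _ ->.
by apply: hC => //; apply: inC; rewrite E !inE eqxx ?orbT.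
Qed.
Lemma arith (r u a L : nat) : 3 <= r -> 2 <= u -> 1 <= a -> a < r -> (3 <= a -> a < u) ->
  a * (r - a) <= L -> r * (r - a) <= 2 * L ->
  minn r.-1 u.-1 * (r - minn r.-1 u.-1) <= L.
Proof.
move=> r3 u2 a1 ar au L1 L2.
have k1 : 1 <= minn r.-1 u.-1 by lia.
have kr : minn r.-1 u.-1 < r by lia.
move: k1 kr; set k := minn r.-1 u.-1 => k1 kr.
have [ak|ka] := leqP a k.
  have [rka|akr] := leqP (r - k) a.
    apply: leq_trans L1.
    have E : a * (r - a) = k * (r - k) + (a - (r - k)) * (k - a) by nia.
    by rewrite E leq_addr.
  have [k2|k2] := leqP (2 * k) r.
    have : 2 * (k * (r - k)) <= r * (r - a) by nia.
    lia.
  have : 2 * (k * (r - k)) <= r * (r - a) by nia.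
  lia.
have a2 : a <= 2 by apply: contraTT ka; rewrite -ltnNge => a3; have := au a3; lia.
have -> : k = 1 by lia.
apply: leq_trans L1; nia.
Qed.

Definition Nb (T : finType) (H : {set {set T}}) (h : {set T}) (x : T) :=
  [set y in h | (y == x) || heavy 2 H [set x; y]].
Definition Lh (T : finType) (H : {set {set T}}) (h : {set T}) :=
  [set e in subedges h | ~~ heavy 2 H e].

Lemma H3_bound (U V : finType) (EF : {set {set U}}) (H : {set {set V}}) r h :
  is_graph EF -> 2 <= #|U| -> 3 <= r -> (forall h, h \in H -> #|h| = r) ->
  ~ has_BergeF EF H -> h \in H3 H #|EF| ->
  minn r.-1 #|U|.-1 * (r - minn r.-1 #|U|.-1) <= #|Lh H h|.
Proof.
move=> gF U2 r3 Hr nB.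
set p := #|EF|.
rewrite /H3 in_setD in_setU negb_or => /andP[/andP[nH1 nH2] hH].
have hr := Hr h hH.
have [e eS enh] : exists2 e, e \in subedges h & ~~ heavy p H e.
  by apply/forall_inPn; move: nH2; rewrite inE hH.
have p2 : 2 <= p.
  have := eS; rewrite inE => /andP[eh _].
  have := codeg_gt0 hH eh; move: enh; rewrite /heavy -ltnNge; lia.
pose N x := Nb H h x.
have Nh x : N x \subset h by apply/subsetP=> y; rewrite inE => /andP[].
have NP x y : (y \in N x) = (y \in h) && ((y == x) || heavy 2 H [set x; y]) by rewrite inE.
have trans := fun x y z => @trans_lemma V H p h x y z hH nH1 p2.
have clique x0 x y : x0 \in h -> x \in N x0 -> y \in N x0 -> x != y -> heavy 2 H [set x; y].
  move=> x0h; rewrite !NP => /andP[xh /orP[/eqP->|hx]] /andP[yh /orP[/eqP->|hy]] xy.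
  - by rewrite eqxx in xy.
  - done.
  - by rewrite set2C.
  - case: (eqVneq x x0) => [->|xx0] //.
    case: (eqVneq y x0) => [->|yx0]; first by rewrite set2C.
    by apply: (trans x x0 y) => //; [rewrite eq_sym | rewrite set2C].
have h0 : 0 < #|h| by rewrite hr; lia.
pose a := \max_(x in h) #|N x|.
have [x0 x0h aE] := eq_bigmax_cond (fun x => #|N x|) h0.
have amax x : x \in h -> #|N x| <= a by move=> xh; exact: leq_bigmax_cond.
rewrite -/a in aE.
have x0N : x0 \in N x0 by rewrite NP x0h eqxx.
have a1 : 1 <= a by rewrite aE; apply/card_gt0P; exists x0.
have ar : a < r.
  rewrite aE -hr ltnNge; apply/negP => le.
  have Neq : N x0 = h by apply/eqP; rewrite eqEcard Nh le.
  move: eS; rewrite inE => /andP[eh /cards2P[u [v [uv ee]]]].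
  have uh : u \in h by apply: (subsetP eh); rewrite ee !inE eqxx.
  have vh : v \in h by apply: (subsetP eh); rewrite ee !inE eqxx orbT.
  have : 0 < #|h :\: [set u; v]|.
    by rewrite cardsDS ?cards2 ?uv; [lia | rewrite -ee].
  case/card_gt0P => z; rewrite !inE negb_or => /andP[/andP[zu zv] zh].
  move/negP: nH1; apply.
  apply: (@tri_lemma V H p h v u z hH vh uh zh); rewrite 1?eq_sym //.
  - by apply: (clique x0) => //; rewrite ?Neq // eq_sym.
  - by apply: (clique x0) => //; rewrite ?Neq // eq_sym.
  - by rewrite set2C -ee enh.
have aU : 3 <= a -> a < #|U|.
  move=> a3; rewrite ltnNge; apply/negP => Ua; apply: nB.
  apply: (@berge_clique U V EF H (N x0) x0 gF); first by rewrite -aE.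
  move=> x y xN yN xy; apply/negPn/negP => nhp.
  have : 0 < #|N x0 :\: [set x; y]|.
    rewrite cardsDS ?cards2 ?xy -?aE; first lia.
    by apply/subsetP => w; rewrite in_set2 => /orP[]/eqP->.
  case/card_gt0P => z; rewrite in_setD in_set2 negb_or => /andP[/andP[zx zy] zN].
  move/negP: nH1; apply.
  have xh := subsetP (Nh x0) x xN.
  have yh := subsetP (Nh x0) y yN.
  have zh := subsetP (Nh x0) z zN.
  apply: (@tri_lemma V H p h y x z hH yh xh zh); rewrite 1?eq_sym //.
  - by apply: (clique x0) => //; rewrite eq_sym.
  - by apply: (clique x0) => //; rewrite eq_sym.
  - by rewrite set2C nhp.
have LhP e' : (e' \in Lh H h) = (e' \in subedges h) && ~~ heavy 2 H e' by rewrite in_set.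
have L1 : a * (r - a) <= #|Lh H h|.
  have cD : #|h :\: N x0| = r - a by rewrite cardsDS // hr aE.
  rewrite -cD aE -cardsX.
  rewrite -(@card_in_imset _ _ (fun u : V * V => [set u.1; u.2])).
  - apply: subset_leq_card; apply/subsetP => e' /imsetP [[x y]].
    rewrite in_setX in_setD /= => /andP[xN /andP[yN yh]] ->.
    have xh : x \in h by apply: (subsetP (Nh x0)).
    have xy : x != y by apply: contraNneq yN => <-.
    rewrite LhP sub2P //=.
    have y0 : x0 != y by apply: contraNneq yN => <-.
    apply/negP => hxy; case/negP: yN; rewrite NP yh /=.
    case: (eqVneq x x0) => [<-|xx0]; first by rewrite hxy orbT.
    apply/orP; right; move: xN; rewrite NP xh /= (negbTE xx0) /= => hx.
    by apply: (trans x0 x y) => //; rewrite eq_sym.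
  - move=> [x y] [x' y']; rewrite !in_setX !in_setD /=.
    move=> /andP[xN /andP[yN _]] /andP[x'N /andP[y'N _]] /= E.
    have : x \in [set x'; y'] by rewrite -E !inE eqxx.
    rewrite in_set2 => /orP[/eqP xx|/eqP xy']; last by move: xN; rewrite xy' (negbTE y'N).
    have : y \in [set x'; y'] by rewrite -E !inE eqxx orbT.
    rewrite in_set2 => /orP[/eqP yx|/eqP ->]; last by rewrite xx.
    by move: yN; rewrite yx x'N.
have L2 : r * (r - a) <= 2 * #|Lh H h|.
  have s1 : #|h| * (r - a) <= \sum_(x in h) #|h :\: N x|.
    rewrite -sum_nat_const; apply: leq_sum => x xh; rewrite cardsDS // hr.
    by have := amax x xh; lia.
  have s2 : \sum_(x in h) #|h :\: N x| <= \sum_(x in h) #|[set e in Lh H h | x \in e]|.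
    apply: leq_sum => x xh.
    have xN : x \in N x by rewrite NP xh eqxx.
    rewrite -(@card_in_imset _ _ (fun y => [set x; y]) (h :\: N x)).
    - apply: subset_leq_card; apply/subsetP => e' /imsetP [y].
      rewrite in_setD => /andP [yN yh] ->.
      have xy : x != y by apply: contraNneq yN => <-.
      rewrite in_set LhP sub2P //= !inE eqxx andbT.
      by apply: contra yN => hxy; rewrite NP yh hxy orbT.
    - move=> y y'; rewrite !in_setD => /andP[yN _] /andP[y'N _] E.
      have : y \in [set x; y'] by rewrite -E !inE eqxx orbT.
      rewrite in_set2 => /orP[/eqP yx| /eqP //].
      by move: yN; rewrite yx xN.
  have s3 := dcount h (Lh H h) (fun x e => x \in e).
  have s4 : \sum_(e in Lh H h) #|[set x in h | x \in e]| <= \sum_(e in Lh H h) 2.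
    apply: leq_sum => e' eL; move: eL; rewrite LhP inE => /andP[/andP[_ /eqP c2] _].
    by rewrite -c2; apply: subset_leq_card; apply/subsetP => x; rewrite inE => /andP[].
  rewrite sum_nat_const in s4.
  move: s1 s2 s3 s4; rewrite hr /=; lia.
exact: (@arith r #|U| a #|Lh H h|).
Qed.
Unset Implicit Arguments.
Lemma part_i (U V : finType) (EF : {set {set U}}) (H : {set {set V}}) :
  is_graph EF -> ~ has_BergeF EF H -> ~ contains_copy EF (G2 H #|EF|).
Proof.
move=> gF nB [phi [phii hc]]; apply: nB; apply: (@berge_of U V EF H phi phii) => e eE.
have := hc e eE; rewrite inE => /andP[_ /exists_inP [h hH2 eh]].
move: hH2; rewrite inE => /andP[_ /forall_inP al].
by apply: al; rewrite inE eh card_imset // gF.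
Qed.

Lemma cover_bound (V : finType) (H : {set {set V}}) p :
  #|H| <= #|H1 H p| + #|H2 H p| + #|H3 H p|.
Proof.
have sub : H \subset (H1 H p :|: H2 H p) :|: H3 H p.
  apply/subsetP => h hH; rewrite /H3 !in_setU in_setD hH andbT.
  by rewrite in_setU orbN.
have := subset_leq_card sub; rewrite !cardsU; lia.
Qed.

Lemma H2_bound (V : finType) (H : {set {set V}}) p r :
  (forall h, h \in H -> #|h| = r) -> #|H2 H p| <= ncliques r (G2 H p).
Proof.
move=> Hr; apply: subset_leq_card; apply/subsetP => h hH2.
have hH : h \in H by move: hH2; rewrite inE => /andP[].
rewrite inE Hr // eqxx /=; apply/subsetP => e eS.
move: eS; rewrite inE => /andP[eh c2].
rewrite /G2 /shadow inE c2 /=; apply/exists_inP; exists h => //.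
Qed.

Lemma H3_total (U V : finType) (EF : {set {set U}}) (H : {set {set V}}) r :
  is_graph EF -> 2 <= #|U| -> 3 <= r -> (forall h, h \in H -> #|h| = r) ->
  ~ has_BergeF EF H ->
  #|H3 H #|EF| | * (minn r.-1 #|U|.-1 * (r - minn r.-1 #|U|.-1)) <= #|G3 H #|EF| |.
Proof.
move=> gF U2 r3 Hr nB.
set p := #|EF|.
rewrite -sum_nat_const.
apply: (@leq_trans (\sum_(h in H3 H p) #|Lh H h|)).
  by apply: leq_sum => h hH3; exact: (@H3_bound U V EF H r h gF U2 r3 Hr nB hH3).
have LG h e : h \in H3 H p -> e \in Lh H h -> e \in G3 H p.
  move=> hH3; rewrite /Lh in_set => /andP[eS el].
  by rewrite /G3 in_set el andbT; apply/bigcupP; exists h.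
rewrite (eq_bigr (fun h => #|[set e in G3 H p | e \in Lh H h]|)); last first.
  move=> h hH3; apply: eq_card => e; rewrite [RHS]in_set.
  by case eL: (e \in Lh H h); rewrite ?andbF // (LG h e).
rewrite (dcount (H3 H p) (G3 H p) (fun h e => e \in Lh H h)).
rewrite -sum1_card; apply: leq_sum => e eG.
have c : codeg H e < 2 by move: eG; rewrite /G3 in_set /heavy -ltnNge => /andP[].
have c1 : codeg H e <= 1 by lia.
apply: leq_trans c1; apply: subset_leq_card; apply/subsetP => h.
move=> hF; move: hF; rewrite in_set => /andP[hH3 eL].
have hH : h \in H by move: hH3; rewrite /H3 in_setD => /andP[].
rewrite /codeg in_set hH /=.
by move: eL; rewrite /Lh in_set inE => /andP[/andP[-> _] _].
Qed.

Lemma H1_nat (V : finType) (H : {set {set V}}) p (Tch : {set V} -> {set V}) :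
  (forall h, h \in H1 H p -> good_triangle H p h (Tch h)) ->
  #|H1 H p| <= ncliques 3 (G1 H p Tch) * (p - 1).
Proof.
move=> hT.
set C3 := [set S : {set V} | (#|S| == 3) && (subedges S \subset G1 H p Tch)].
have TC h : h \in H1 H p -> Tch h \in C3.
  move=> hH1; have := hT h hH1 => /and4P[_ c3 _ _].
  by rewrite inE c3 /=; exact: (bigcup_sup h hH1).
have e1 : #|H1 H p| = \sum_(S in C3) #|[set h in H1 H p | Tch h == S]|.
  rewrite -(dcount (H1 H p) C3 (fun h S => Tch h == S)) -sum1_card.
  apply: eq_bigr => h hH1.
  have -> : [set S in C3 | Tch h == S] = [set Tch h].
    apply/setP => S; rewrite in_set in_set1 eq_sym.
    by case: eqP => [->|]; rewrite ?andbF ?TC.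
  by rewrite cards1.
rewrite e1 /ncliques -/C3 -sum_nat_const; apply: leq_sum => S _.
case: (set_0Vmem [set h in H1 H p | Tch h == S]) => [->|[h0]]; first by rewrite cards0.
rewrite in_set => /andP[h0H1 /eqP h0S].
have := hT h0 h0H1 => /and4P[_ _ _ /exists_inP[e eS enh]].
rewrite h0S in eS.
have : codeg H e < p by move: enh; rewrite /heavy -ltnNge.
have sub : [set h in H1 H p | Tch h == S] \subset [set h in H | e \subset h].
  apply/subsetP => h; rewrite in_set => /andP[hH1 /eqP hS].
  have hH : h \in H by move: hH1; rewrite inE => /andP[].
  have := hT h hH1 => /and4P[Th _ _ _].
  rewrite inE hH /=; apply: subset_trans Th; rewrite hS.
  by move: eS; rewrite inE => /andP[].
have := subset_leq_card sub; rewrite -/(codeg H e); lia.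
Qed.

Lemma G1_p0 (V : finType) (H : {set {set V}}) (Tch : {set V} -> {set V}) :
  (forall h, h \in H1 H 0 -> good_triangle H 0 h (Tch h)) ->
  ncliques 3 (G1 H 0 Tch) = 0.
Proof.
move=> hT.
have G0 : G1 H 0 Tch = set0.
  apply/setP => e; rewrite inE; apply/bigcupP => -[h hH1 _].
  by have := hT h hH1 => /and4P[_ _ _ /exists_inP[e' _]]; rewrite /heavy leq0n.
rewrite /ncliques G0; apply/eqP; rewrite cards_eq0; apply/eqP/setP => S.
rewrite !inE; apply/negP => /andP[/eqP c3 sub].
have [x xS] : exists x, x \in S by apply/card_gt0P; rewrite c3.
have : S :\ x \in subedges S.
  rewrite inE subsetDl /=; move: c3; rewrite (cardsD1 x) xS add1n => -[->] //.
by move/(subsetP sub); rewrite inE.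
Qed.

Local Open Scope ring_scope.
Unset Implicit Arguments.

Theorem proposition6 (U V : finType) (EF : {set {set U}}) (r : nat)
  (H : {set {set V}}) (Tch : {set V} -> {set V}) :
  is_graph EF -> (2 <= #|U|)%N -> (3 <= r)%N ->
  (forall h, h \in H -> #|h| = r) ->
  ~ has_BergeF EF H ->
  (forall h, h \in H1 H #|EF| -> good_triangle H #|EF| h (Tch h)) ->
  ~ contains_copy EF (G2 H #|EF|) /\
  (let k := minn r.-1 #|U|.-1 in
   (#|H|%:R : rat) <=
     (#|EF|%:R - 1) * (ncliques 3 (G1 H #|EF| Tch))%:R
     + (ncliques r (G2 H #|EF|))%:R
     + (#|G3 H #|EF| |)%:R / (k * (r - k))%:R).
Proof.
move=> gF U2 r3 Hr nB hT.
split; first exact: part_i.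
move=> k.
have k1 : (1 <= k)%N by rewrite /k; lia.
have kr : (k < r)%N by rewrite /k; lia.
have K0 : (0 < k * (r - k))%N by rewrite muln_gt0 k1 subn_gt0 kr.
have c3 := @H3_total U V EF H r gF U2 r3 Hr nB; rewrite -/k in c3.
have c2 := @H2_bound V H #|EF| r Hr.
have c1 := @H1_nat V H #|EF| Tch hT.
have cH := @cover_bound V H #|EF|.
have r1 : (#|H1 H #|EF| |%:R : rat) <= (#|EF|%:R - 1) * (ncliques 3 (G1 H #|EF| Tch))%:R.
  case: (posnP #|EF|) => p0.
    move: hT c1; rewrite p0 => hT c1.
    rewrite (@G1_p0 V H Tch hT) mulr0 lern0 -leqn0.
    by move: c1; rewrite (@G1_p0 V H Tch hT).
  by rewrite -(natrB _ p0) -natrM ler_nat mulnC.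
have r3' : (#|H3 H #|EF| |%:R : rat) <= #|G3 H #|EF| |%:R / (k * (r - k))%:R.
  by rewrite ler_pdivlMr ?ltr0n // -natrM ler_nat.
apply: le_trans (_ : (#|H1 H #|EF| | + #|H2 H #|EF| | + #|H3 H #|EF| |)%:R <= _).
  by rewrite ler_nat.
rewrite !natrD; apply: lerD; [apply: lerD => // | by []].
by rewrite ler_nat.
Qed.
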